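(* For every weak composition $a$ of length $n$, \[\mathfrak{Q}_a=\sum_{\substack{b\ge a\\ \mathrm{flat}(b)=\mathrm{flat}(a)}}\mathfrak{Q}^{(1)}_b,\] where $b$ ranges over weak compositions of length $n$.
   Context: Weak composition of length $n$: sequence of $n$ nonnegative integers; $\mathrm{flat}(a)$ deletes zero parts; $b\ge a$ means $b_1+\cdots+b_i\ge a_1+\cdots+a_i$ for all $i$. $D(a)$: $a_i$ left-justified boxes in row $i$, row 1 lowest. Quasi-key tableau of shape $a$: filling of $D(a)$ with positive integers such that (1) entries weakly decrease along rows and no entry of row $i$ exceeds $i$; (2) column entries distinct and increasing going up the first column; (3) if an entry $i$ is above an entry $k$ in the same column with $i<k$, there is an entry $j$ immediately right of $k$ with $i<j$; (4) for two rows with the higher strictly longer, an entry $i$ in column $c$ of the lower row and $j$ in column $c+1$ of the higher row satisfy $i<j$. $\mathfrak{Q}_a=\sum_T\prod_ix_i^{\#\{\text{entries } i \text{ in } T\}}$ over quasi-key tableaux of shape $a$; $\mathfrak{Q}^{(1)}_a$ is the same sum restricted to quasi-key tableaux whose first-column entries equal their row indices. *)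

(* Defs.v *)
From HB Require Import structures.
From mathcomp Require Import all_boot all_order all_algebra.
From mathcomp Require Import mpoly.
Set Implicit Arguments. Unset Strict Implicit. Unset Printing Implicit Defensive.
Import GRing.Theory.
Local Open Scope ring_scope.

(* Weak compositions are represented as [seq nat]; rows and columns are
   0-indexed internally: row r (0 <= r < size a) is row r+1 of the paper
   (row 1 lowest), column c is column c+1.                                 *)

Definition flat (a : seq nat) : seq nat := [seq x <- a | x != 0%N].

Definition dominates (b a : seq nat) : bool :=
  [forall i : 'I_(size a).+1, (sumn (take i a) <= sumn (take i b))%N].

Definition cellin (a : seq nat) (r c : nat) : bool :=
  (r < size a)%N && (c < nth 0%N a r)%N.

(* Cells of D(a) have
   r < size a and c < sumn a, so the bounded quantifiers cover all cells. *)
Definition quasi_key (a : seq nat) (t : nat -> nat -> nat) : bool :=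
  let n := size a in let m := sumn a in
  [&&
      [forall r : 'I_n, forall c : 'I_m,
          cellin a r c ==> (0 < t r c <= r.+1)%N],
      [forall r : 'I_n, forall c : 'I_m,
          cellin a r c.+1 ==> (t r c.+1 <= t r c)%N],
      [forall r : 'I_n, forall r' : 'I_n, forall c : 'I_m,
          [&& r != r', cellin a r c & cellin a r' c] ==> (t r c != t r' c)],
      [forall r : 'I_n, forall r' : 'I_n,
          [&& (r < r')%N, cellin a r 0 & cellin a r' 0] ==> (t r 0 < t r' 0)%N],
      [forall r : 'I_n, forall r' : 'I_n, forall c : 'I_m,
          [&& (r < r')%N, cellin a r c, cellin a r' c & (t r' c < t r c)%N] ==>
          (cellin a r c.+1 && (t r' c < t r c.+1)%N)] &
      [forall r : 'I_n, forall r' : 'I_n, forall c : 'I_m,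
          [&& (r < r')%N, (nth 0 a r < nth 0 a r')%N, cellin a r c
            & cellin a r' c.+1] ==> (t r c < t r' c.+1)%N]].

(* Fillings as finite functions on rows 'I_n x columns 'I_(sumn a),
   with values in 'I_n.+1 (entries are <= n); cells outside D(a) get 0. *)
Definition filling (n : nat) (a : seq nat) :=
  {ffun 'I_n * 'I_(sumn a) -> 'I_n.+1}.

Definition entry (n : nat) (a : seq nat) (T : filling n a) (r c : nat) : nat :=
  match (insub r : option 'I_n), (insub c : option 'I_(sumn a)) with
  | Some r', Some c' => nat_of_ord (T (r', c'))
  | _, _ => 0%N
  end.

Definition is_qkt (n : nat) (a : seq nat) (T : filling n a) : bool :=
  [forall p : 'I_n * 'I_(sumn a), ~~ cellin a p.1 p.2 ==> (nat_of_ord (T p) == 0%N)]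
  && quasi_key a (entry T).

Definition first_col_id (n : nat) (a : seq nat) (T : filling n a) : bool :=
  [forall r : 'I_n, cellin a r 0 ==> (entry T r 0 == r.+1)].

(* x^T = prod_i x_i^{#entries i in T}; variable 'X_i (i : 'I_n) is x_{i+1} *)
Definition weight (n : nat) (a : seq nat) (T : filling n a) : {mpoly int[n]} :=
  \prod_(i < n) 'X_i ^+ #|[set p : 'I_n * 'I_(sumn a) |
                           cellin a p.1 p.2 && (nat_of_ord (T p) == i.+1)]|.

Definition QK (n : nat) (a : seq nat) : {mpoly int[n]} :=
  \sum_(T : filling n a | is_qkt T) weight T.

Definition QK1 (n : nat) (a : seq nat) : {mpoly int[n]} :=
  \sum_(T : filling n a | is_qkt T && first_col_id T) weight T.

Definition seq_of_ffun (n N : nat) (f : {ffun 'I_n -> 'I_N}) : seq nat :=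
  [seq nat_of_ord (f i) | i <- enum 'I_n].

(* Main.v *)
Require Import Defs.
From HB Require Import structures.
From mathcomp Require Import all_boot all_order all_algebra.
From mathcomp Require Import mpoly.
Set Implicit Arguments. Unset Strict Implicit. Unset Printing Implicit Defensive.

Definition pos (c : seq nat) := [seq j <- iota 0 (size c) | nth 0 c j != 0].

Lemma mem_pos c j : (j \in pos c) = (j < size c) && (nth 0 c j != 0).
Proof. by rewrite mem_filter mem_iota add0n andbC. Qed.

Lemma pos_sorted c : sorted ltn (pos c).
Proof. apply: sorted_filter; [exact: ltn_trans | exact: iota_ltn_sorted]. Qed.

Lemma pos_uniq c : uniq (pos c).
Proof. exact: filter_uniq (iota_uniq _ _). Qed.

Lemma flat_pos c : flat c = map (nth 0 c) (pos c).
Proof. by rewrite /flat /pos -{1}(mkseq_nth 0 c) /mkseq filter_map. Qed.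

Lemma size_pos c : size (pos c) = size (flat c).
Proof. by rewrite flat_pos size_map. Qed.

Lemma nth_flat c i : i < size (pos c) -> nth 0 (flat c) i = nth 0 c (nth 0 (pos c) i).
Proof. by move=> h; rewrite flat_pos (nth_map 0). Qed.

Lemma flat_neq0 c x : x \in flat c -> x != 0.
Proof. by rewrite mem_filter => /andP[]. Qed.

Lemma ltn_index s x y : sorted ltn s -> x \in s -> y \in s ->
  (index x s < index y s) = (x < y).
Proof.
move=> ss xs ys; case: (ltnP (index x s) (index y s)) => h.
  by rewrite (sorted_ltn_index ltn_trans ss x y xs ys h).
move: h; rewrite leq_eqVlt => /orP[/eqP e|h].
  have : nth 0 s (index y s) = nth 0 s (index x s) by rewrite e.
  by rewrite !nth_index // => ->; rewrite ltnn.
by apply/esym/negbTE; rewrite -leqNgt ltnW // (sorted_ltn_index ltn_trans ss y x ys xs h).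
Qed.

Lemma ltn_nth s i j : sorted ltn s -> i < j -> j < size s -> nth 0 s i < nth 0 s j.
Proof.
move=> ss ij js; apply: (sorted_ltn_nth ltn_trans 0 ss) => //.
by rewrite inE (ltn_trans ij js).
Qed.

Lemma leq_nth s i j : sorted ltn s -> i <= j -> j < size s -> nth 0 s i <= nth 0 s j.
Proof.
move=> ss; rewrite leq_eqVlt => /orP[/eqP->//|ij] js.
by rewrite ltnW // ltn_nth.
Qed.

Definition mkcomp n (v L : seq nat) :=
  [seq (if j \in v then nth 0 L (index j v) else 0) | j <- iota 0 n].

Lemma size_mkcomp n v L : size (mkcomp n v L) = n.
Proof. by rewrite size_map size_iota. Qed.

Lemma nth_mkcomp n v L j : j < n ->
  nth 0 (mkcomp n v L) j = if j \in v then nth 0 L (index j v) else 0.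
Proof. by move=> h; rewrite (nth_map 0) ?size_iota // nth_iota. Qed.

Lemma mkcomp_pos n v L : sorted ltn v -> {in v, forall x, x < n} ->
  size v = size L -> 0 \notin L ->
  pos (mkcomp n v L) = v /\ flat (mkcomp n v L) = L.
Proof.
move=> sv vn sz L0.
have uv : uniq v by move: sv; rewrite ltn_sorted_uniq_leq => /andP[].
have pv : pos (mkcomp n v L) = v.
  apply: (irr_sorted_eq ltn_trans ltnn) => //; first exact: pos_sorted.
  move=> j; rewrite mem_pos size_mkcomp.
  case jn: (j < n) => /=; last first.
    by apply/esym/negbTE; apply: contraFN jn => /vn.
  rewrite nth_mkcomp //; case jv: (j \in v) => //=.
  apply: contra L0 => /eqP <-; apply: mem_nth; by rewrite -sz index_mem.
split=> //; rewrite flat_pos pv.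
apply: (@eq_from_nth _ 0); rewrite ?size_map // => i iv.
have vi : nth 0 v i \in v by apply: mem_nth.
by rewrite (nth_map 0) // nth_mkcomp ?vn // vi index_uniq.
Qed.

Lemma comp_mk c : c = mkcomp (size c) (pos c) (flat c).
Proof.
apply: (@eq_from_nth _ 0); rewrite ?size_mkcomp // => j jc.
rewrite nth_mkcomp //; case jp: (j \in pos c).
  by rewrite nth_flat ?index_mem // nth_index.
by move: jp; rewrite mem_pos jc /= => /negbFE/eqP.
Qed.

Lemma sumn_take_big x c :
  sumn (take x c) = \sum_(i < size (pos c) | nth 0 (pos c) i < x) nth 0 (flat c) i.
Proof.
have -> : sumn (take x c) = \sum_(0 <= i < size c | i < x) nth 0 c i.
  have sz : size (take x c) = minn x (size c) by rewrite size_take.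
  rewrite sumnE (big_nth 0) sz [RHS]big_mkcond /=.
  have e : forall i, i < minn x (size c) -> nth 0 (take x c) i = nth 0 c i.
    by move=> i; rewrite leq_min => /andP[h _]; rewrite nth_take.
  case: (leqP x (size c)) => h.
    rewrite (big_cat_nat (leq0n x) h) /= [X in _ + X]big1_seq ?addn0; last first.
      by move=> i /andP[_]; rewrite mem_index_iota => /andP[xi _]; rewrite ltnNge xi.
    apply: eq_big_seq => i; rewrite mem_index_iota => /= ix.
    by rewrite ix nth_take.
  apply: eq_big_seq => i; rewrite mem_index_iota => /= ix.
  by rewrite (ltn_trans ix h) nth_take // (ltn_trans ix h).
rewrite (eq_bigr (fun i => if nth 0 c i != 0 then nth 0 c i else 0)); last first.
  by move=> i _; case: eqP => // ->.
rewrite -big_mkcondr /= (eq_bigl (fun i => (nth 0 c i != 0) && (i < x))); last first.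
  by move=> i; rewrite andbC.
rewrite -big_filter_cond /index_iota subn0 -/(pos c) (big_nth 0) big_mkord.
by apply: eq_bigr => i _; rewrite nth_flat.
Qed.

Lemma sum_sub (K : nat) (P Q : pred 'I_K) (F : 'I_K -> nat) :
  (forall i, P i -> Q i) -> \sum_(i | P i) F i <= \sum_(i | Q i) F i.
Proof.
move=> PQ; rewrite [X in _ <= X]big_mkcond [X in X <= _]big_mkcond.
apply: leq_sum => i _; case Pi: (P i); first by rewrite PQ.
by case: (Q i).
Qed.

Section Dom.
Variables (a b : seq nat).
Hypothesis (Hs : size b = size a) (Hf : flat b = flat a).

Lemma dom_of_pos : (forall i, i < size (pos a) -> nth 0 (pos b) i <= nth 0 (pos a) i) ->
  dominates b a.
Proof.
move=> H; apply/forallP => x; rewrite !sumn_take_big.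
have e : size (pos b) = size (pos a) by rewrite !size_pos Hf.
rewrite e Hf; apply: sum_sub => i hi.
by apply: leq_ltn_trans hi; apply: H.
Qed.

Lemma pos_of_dom : dominates b a ->
  forall i, i < size (pos a) -> nth 0 (pos b) i <= nth 0 (pos a) i.
Proof.
move=> /forallP D i ia; rewrite leqNgt; apply/negP => lt.
have pa : nth 0 (pos a) i < size a.
  by move: (mem_nth 0 ia); rewrite mem_pos => /andP[].
have := D (Ordinal (pa : (nth 0 (pos a) i).+1 < (size a).+1)).
rewrite /= !sumn_take_big.
have e : size (pos b) = size (pos a) by rewrite !size_pos Hf.
rewrite e Hf (bigD1 (Ordinal ia)) //=.
set L := flat a.
have Li : 0 < nth 0 L i.
  rewrite lt0n; apply: (@flat_neq0 a); apply: mem_nth; by rewrite -size_pos.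
have h1 : \sum_(l < size (pos a) | nth 0 (pos b) l < (nth 0 (pos a) i).+1) nth 0 L l <=
          \sum_(l < size (pos a) | l < i) nth 0 L l.
  apply: sum_sub => l hl; rewrite ltnNge; apply/negP => il.
  have : nth 0 (pos b) i <= nth 0 (pos b) l by apply: leq_nth; rewrite ?pos_sorted ?e.
  by move=> h; move: (leq_trans lt (leq_trans h hl)); rewrite ltnn.
have h2 : \sum_(l < size (pos a) | l < i) nth 0 L l <=
          \sum_(l < size (pos a) | (nth 0 (pos a) l < (nth 0 (pos a) i).+1) && (l != Ordinal ia)) nth 0 L l.
  apply: sum_sub => l hl; rewrite ltnS leq_nth ?pos_sorted ?(ltnW hl) //=.
  by rewrite -val_eqE /= neq_ltn hl.
move=> h3; have := leq_trans h3 (leq_trans h1 h2).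
by rewrite -{2}(add0n (\sum_(_ < _ | _) _)) leq_add2r leqNgt Li.
Qed.
End Dom.
Lemma nth_le_sumn (a : seq nat) r : nth 0 a r <= sumn a.
Proof.
elim: a r => [|x a IH] [|r] //=; first exact: leq_addr.
exact: leq_trans (IH r) (leq_addl _ _).
Qed.

Lemma cellP a r c : cellin a r c -> r < size a /\ c < sumn a.
Proof.
by case/andP=> h1 h2; split=> //; exact: leq_trans h2 (nth_le_sumn a r).
Qed.

Definition bnd a (t : nat -> nat -> nat) :=
  forall r c, cellin a r c -> 0 < t r c <= r.+1.

Definition qk2 a (t : nat -> nat -> nat) :=
 [/\ forall r c, cellin a r c.+1 -> t r c.+1 <= t r c,
  forall r r' c, r != r' -> cellin a r c -> cellin a r' c -> t r c != t r' c,
  forall r r', r < r' -> cellin a r 0 -> cellin a r' 0 -> t r 0 < t r' 0,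
  forall r r' c, r < r' -> cellin a r c -> cellin a r' c -> t r' c < t r c ->
     cellin a r c.+1 && (t r' c < t r c.+1) &
  forall r r' c, r < r' -> nth 0 a r < nth 0 a r' -> cellin a r c ->
     cellin a r' c.+1 -> t r c < t r' c.+1].

Lemma cellS a r c : cellin a r c.+1 -> cellin a r c.
Proof. by case/andP=> h1 h2; rewrite /cellin h1 ltnW. Qed.

Lemma qkE a t : quasi_key a t <-> bnd a t /\ qk2 a t.
Proof.
rewrite /quasi_key; split.
  move/andP=> [h1 /andP[h2 /andP[h3 /andP[h4 /andP[h5 h6]]]]]; split.
    move=> r c cl; have [rn cm] := cellP cl.
    by move/forallP: h1 => /(_ (Ordinal rn)) /forallP /(_ (Ordinal cm)) /implyP; apply.
  split.
  - move=> r c cl; have [rn cm] := cellP (cellS cl).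
    by move/forallP: h2 => /(_ (Ordinal rn)) /forallP /(_ (Ordinal cm)) /implyP; apply.
  - move=> r r' c ne cl cl'; have [rn cm] := cellP cl; have [rn' _] := cellP cl'.
    move/forallP: h3 => /(_ (Ordinal rn)) /forallP /(_ (Ordinal rn')) /forallP
       /(_ (Ordinal cm)) /implyP; apply; by rewrite /= ne cl cl'.
  - move=> r r' lt cl cl'; have [rn cm] := cellP cl; have [rn' _] := cellP cl'.
    move/forallP: h4 => /(_ (Ordinal rn)) /forallP /(_ (Ordinal rn')) /implyP; apply.
    by rewrite /= lt cl cl'.
  - move=> r r' c lt cl cl' tl; have [rn cm] := cellP cl; have [rn' _] := cellP cl'.
    move/forallP: h5 => /(_ (Ordinal rn)) /forallP /(_ (Ordinal rn')) /forallP
       /(_ (Ordinal cm)) /implyP; apply; by rewrite /= lt cl cl'.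
  - move=> r r' c lt ln cl cl'; have [rn cm] := cellP cl; have [rn' _] := cellP cl'.
    move/forallP: h6 => /(_ (Ordinal rn)) /forallP /(_ (Ordinal rn')) /forallP
       /(_ (Ordinal cm)) /implyP; apply; by rewrite /= lt ln cl cl'.
case=> h1 [h2 h3 h4 h5 h6]; apply/andP; split.
  by apply/forallP=> r; apply/forallP=> c; apply/implyP; apply: h1.
apply/andP; split.
  by apply/forallP=> r; apply/forallP=> c; apply/implyP; apply: h2.
apply/andP; split.
  apply/forallP=> r; apply/forallP=> r'; apply/forallP=> c; apply/implyP.
  by case/and3P=> ne cl cl'; apply: h3.
apply/andP; split.
  apply/forallP=> r; apply/forallP=> r'; apply/implyP.
  by case/and3P=> ne cl cl'; apply: h4.
apply/andP; split.
  apply/forallP=> r; apply/forallP=> r'; apply/forallP=> c; apply/implyP.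
  by case/and4P=> ne cl cl' tl; apply: h5.
  apply/forallP=> r; apply/forallP=> r'; apply/forallP=> c; apply/implyP.
  by case/and4P=> ne ln cl cl'; apply: h6.
Qed.

Section Transport.
Variables (a b : seq nat) (t s : nat -> nat -> nat) (tau : nat -> nat).
Hypothesis H1 : forall j, j < size b -> 0 < nth 0 b j ->
  tau j < size a /\ nth 0 a (tau j) = nth 0 b j.
Hypothesis H2 : forall j j', j < size b -> j' < size b -> 0 < nth 0 b j ->
  0 < nth 0 b j' -> j < j' -> tau j < tau j'.
Hypothesis H3 : forall j c, j < size b -> 0 < nth 0 b j -> s j c = t (tau j) c.

Lemma cell_tr j c : cellin b j c ->
  [/\ j < size b, 0 < nth 0 b j, cellin a (tau j) c, nth 0 a (tau j) = nth 0 b j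
    & forall c', s j c' = t (tau j) c'].
Proof.
case/andP=> jb cb; have b0 : 0 < nth 0 b j by exact: leq_ltn_trans cb.
have [ta ea] := H1 jb b0.
by split=> //; [rewrite /cellin ta ea | move=> c'; apply: H3].
Qed.

Lemma qk2_transport : qk2 a t -> qk2 b s.
Proof.
case=> h2 h3 h4 h5 h6; split.
- move=> j c /cell_tr [_ _ cl _ e]; rewrite !e; exact: h2.
- move=> j j' c ne /cell_tr [jb j0 cl _ e] /cell_tr [jb' j0' cl' _ e'].
  rewrite e e'; apply: h3 cl cl'.
  case: (ltngtP j j') ne => // lt _; rewrite neq_ltn.
    by rewrite H2.
  by rewrite (H2 jb' jb j0' j0 lt) orbT.
- move=> j j' lt /cell_tr [jb j0 cl _ e] /cell_tr [jb' j0' cl' _ e'].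
  by rewrite e e'; apply: h4 => //; apply: H2.
- move=> j j' c lt /cell_tr [jb j0 cl ea e] /cell_tr [jb' j0' cl' _ e'].
  rewrite !e e' => tl; have /andP[c1 tl2] := h5 _ _ _ (H2 jb jb' j0 j0' lt) cl cl' tl.
  by rewrite tl2 andbT /cellin jb -ea; case/andP: c1.
- move=> j j' c lt ln /cell_tr [jb j0 cl ea e] /cell_tr [jb' j0' cl' ea' e'].
  rewrite e e'; apply: h6 => //; first exact: H2.
  by rewrite ea ea'.
Qed.
End Transport.

Definition zeroout a (t : nat -> nat -> nat) := forall r c, ~~ cellin a r c -> t r c = 0.

Lemma sumn_flat c : sumn (flat c) = sumn c.
Proof. by elim: c => //= x c IH; case: x => //= x; rewrite IH. Qed.

Lemma cellin_pos a r c : cellin a r c -> r \in pos a.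
Proof. by case/andP=> h1 h2; rewrite mem_pos h1 -lt0n (leq_ltn_trans _ h2). Qed.

Lemma cellin0 a r : cellin a r 0 = (r \in pos a).
Proof. by rewrite mem_pos /cellin lt0n. Qed.

Section Corr.
Variables (a b : seq nat).
Hypothesis Hf : flat b = flat a.

Definition tau j := nth 0 (pos a) (index j (pos b)).
Definition tr (t : nat -> nat -> nat) j c := if j \in pos b then t (tau j) c else 0.

Lemma size_pos_ab : size (pos b) = size (pos a).
Proof. by rewrite !size_pos Hf. Qed.

Lemma tau_mem j : j \in pos b -> tau j \in pos a.
Proof. by move=> h; rewrite /tau mem_nth // -size_pos_ab index_mem. Qed.

Lemma index_tau j : j \in pos b -> index (tau j) (pos a) = index j (pos b).
Proof. by move=> h; rewrite /tau index_uniq ?pos_uniq // -size_pos_ab index_mem. Qed.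

Lemma ab_tau j : j \in pos b -> nth 0 a (tau j) = nth 0 b j.
Proof.
move=> h; have hi : index j (pos b) < size (pos b) by rewrite index_mem.
rewrite /tau -nth_flat -?size_pos_ab // -Hf nth_flat // nth_index //.
Qed.

Lemma tau_mono j j' : j \in pos b -> j' \in pos b -> j < j' -> tau j < tau j'.
Proof.
move=> h h' lt; rewrite /tau ltn_nth ?pos_sorted //.
  by rewrite ltn_index ?pos_sorted.
by rewrite -size_pos_ab index_mem.
Qed.

Lemma map_tau : map tau (pos b) = pos a.
Proof.
apply: (@eq_from_nth _ 0); rewrite size_map ?size_pos_ab // => i ia.
rewrite (nth_map 0) ?size_pos_ab // /tau index_uniq ?pos_uniq ?size_pos_ab //.
Qed.

Lemma tau_lt j : j \in pos b -> tau j < size a.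
Proof. by move/tau_mem; rewrite mem_pos => /andP[]. Qed.

Lemma cell_tau j c : j \in pos b -> cellin b j c = cellin a (tau j) c.
Proof.
move=> h; rewrite /cellin ab_tau // tau_lt //.
by move: h; rewrite mem_pos => /andP[->].
Qed.

Lemma zeroout_tr t : zeroout a t -> zeroout b (tr t).
Proof.
move=> z j c; rewrite /tr; case h: (j \in pos b) => // nc.
by apply: z; rewrite -cell_tau.
Qed.

Lemma qk2_tr t : qk2 a t -> qk2 b (tr t).
Proof.
apply: (qk2_transport (tau := tau)).
- move=> j jb j0; have h : j \in pos b by rewrite mem_pos jb -lt0n.
  by split; [apply: tau_lt | apply: ab_tau].
- move=> j j' jb jb' j0 j0'; apply: tau_mono; by rewrite mem_pos ?jb ?jb' -lt0n.
- by move=> j c jb j0; rewrite /tr mem_pos jb -lt0n j0.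
Qed.

Definition G a' (t : nat -> nat -> nat) x r := count (fun c => t r c == x) (iota 0 (nth 0 a' r)).

Lemma G_tr t x : \sum_(j <- pos b) G b (tr t) x j = \sum_(r <- pos a) G a t x r.
Proof.
rewrite -map_tau big_map; apply: eq_big_seq => j h.
rewrite /G ab_tau //; apply: eq_count => c; by rewrite /tr h.
Qed.
End Corr.

Lemma tr_tr a b t : flat b = flat a -> zeroout a t ->
  forall r c, tr b a (tr a b t) r c = t r c.
Proof.
move=> Hf z r c; rewrite /tr; case h: (r \in pos a).
  rewrite (tau_mem (esym Hf) h) /tau index_tau ?Hf // nth_index //.
by rewrite z //; apply/negP => /cellin_pos; rewrite h.
Qed.

Section Fill.
Variables (n : nat) (a : seq nat).

Lemma entry_ord (T : filling n a) (r : 'I_n) (c : 'I_(sumn a)) : entry T r c = T (r, c).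
Proof. by rewrite /entry !valK. Qed.

Lemma entry_out (T : filling n a) r c : ~~ (r < n) || ~~ (c < sumn a) -> entry T r c = 0.
Proof.
rewrite /entry; case/orP=> h.
  by rewrite insubN.
by case: (insub r) => // ?; rewrite insubN.
Qed.

Lemma entry_le (T : filling n a) r c : entry T r c <= n.
Proof.
rewrite /entry; case: (insub r) => // r'; case: (insub c) => // c'.
by rewrite -ltnS.
Qed.

Definition mkfill (g : nat -> nat -> nat) : filling n a :=
  [ffun p : 'I_n * 'I_(sumn a) => inord (g p.1 p.2)].

Lemma entry_mkfill g r c : g r c <= n ->
  (r >= n -> g r c = 0) -> (c >= sumn a -> g r c = 0) ->
  entry (mkfill g) r c = g r c.
Proof.
move=> gn g1 g2.
case: (ltnP r n) => rn; last by rewrite entry_out ?g1 // -leqNgt rn.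
case: (ltnP c (sumn a)) => cm; last by rewrite entry_out ?g2 //; apply/orP; right; rewrite -leqNgt.
by rewrite (entry_ord _ (Ordinal rn) (Ordinal cm)) ffunE /= inordK.
Qed.

Lemma fill_eq (T1 T2 : filling n a) :
  (forall r c, entry T1 r c = entry T2 r c) -> T1 = T2.
Proof.
move=> H; apply/ffunP => -[r c]; apply: val_inj.
by move: (H r c); rewrite !entry_ord.
Qed.

Hypothesis Ha : size a = n.

Lemma is_qktE (T : filling n a) :
  is_qkt T <-> [/\ zeroout a (entry T), bnd a (entry T) & qk2 a (entry T)].
Proof.
rewrite /is_qkt; split.
  case/andP=> /forallP h1 /qkE [h2 h3]; split=> // r c nc.
  case: (ltnP r n) => rn; last by rewrite entry_out // -leqNgt rn.
  case: (ltnP c (sumn a)) => cm; last by rewrite entry_out //; apply/orP; right; rewrite -leqNgt.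
  rewrite (entry_ord _ (Ordinal rn) (Ordinal cm)).
  by move: (h1 (Ordinal rn, Ordinal cm)) => /implyP /(_ nc) /eqP.
case=> h1 h2 h3; apply/andP; split; last by apply/qkE.
apply/forallP => -[r c]; apply/implyP => /= nc.
by rewrite -entry_ord h1.
Qed.

Lemma fcidE (T : filling n a) :
  first_col_id T <-> forall r, cellin a r 0 -> entry T r 0 = r.+1.
Proof.
rewrite /first_col_id; split.
  move/forallP => h r cl; have [rn _] := cellP cl; rewrite Ha in rn.
  by move: (h (Ordinal rn)) => /implyP /(_ cl) /eqP.
by move=> h; apply/forallP => r; apply/implyP => cl; rewrite h.
Qed.

Lemma card_cells (T : filling n a) (x : nat) :
  #|[set p : 'I_n * 'I_(sumn a) | cellin a p.1 p.2 && (nat_of_ord (T p) == x)]| =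
  \sum_(r <- pos a) G a (entry T) x r.
Proof.
rewrite -sum1dep_card big_mkcond /=.
pose F := (fun (r : 'I_n) (c : 'I_(sumn a)) =>
     if cellin a r c && (entry T r c == x) then 1 else 0).
rewrite (eq_bigr (fun p : 'I_n * 'I_(sumn a) => F p.1 p.2)); last first.
  by move=> -[r c] _; rewrite /F /= entry_ord.
rewrite -(pair_bigA _ F) /F /=.
rewrite /pos Ha big_filter.
have -> : iota 0 n = index_iota 0 n by rewrite /index_iota subn0.
rewrite big_mkord [RHS]big_mkcond.
apply: eq_bigr => r _ /=.
rewrite (eq_bigr (fun c : 'I_(sumn a) =>
   if c < nth 0 a r then (if entry T r c == x then 1 else 0) else 0)); last first.
  by move=> c _; rewrite /cellin Ha ltn_ord /=; case: (c < nth 0 a r).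
rewrite -big_mkcond /= -(big_ord_widen _ (fun c => if entry T r c == x then 1 else 0)
   (nth_le_sumn a r)).
case: eqP => [e|_]; first by rewrite /G e big_ord0.
rewrite /G -sum1_count.
have -> : iota 0 (nth 0 a r) = index_iota 0 (nth 0 a r) by rewrite /index_iota subn0.
by rewrite big_mkord /= [RHS]big_mkcond.
Qed.
End Fill.

Lemma big_bij_eq (R : Type) (idx : R) (op : Monoid.com_law idx) (I J : finType)
  (P : pred I) (Q : pred J) (h : I -> J) (h' : J -> I) (F : I -> R) (G : J -> R) :
  (forall i, P i -> Q (h i)) -> (forall j, Q j -> P (h' j)) ->
  (forall i, P i -> h' (h i) = i) -> (forall j, Q j -> h (h' j) = j) ->
  (forall i, P i -> G (h i) = F i) ->
  \big[op/idx]_(i | P i) F i = \big[op/idx]_(j | Q j) G j.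
Proof.
move=> PQ QP hK h'K GF; rewrite (reindex_onto h h' h'K).
apply: eq_big => [i|i Pi]; last by rewrite GF.
apply/idP/idP => [Pi|/andP[Qhi /eqP e]]; first by rewrite PQ //= hK // eqxx.
by rewrite -e QP.
Qed.

Lemma tr_ext a b t1 t2 : (forall r c, t1 r c = t2 r c) -> forall j c, tr a b t1 j c = tr a b t2 j c.
Proof. by move=> H j c; rewrite /tr H. Qed.

Lemma entry_tr n a b (Hb : size b = n) (Hs : sumn b = sumn a) (Hf : flat b = flat a)
  (T : filling n a) j c :
  entry (mkfill n b (tr a b (entry T))) j c = tr a b (entry T) j c.
Proof.
apply: entry_mkfill.
- by rewrite /tr; case: ifP => _ //; apply: entry_le.
- by move=> h; rewrite /tr mem_pos Hb ltnNge h.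
- move=> h; rewrite /tr; case: ifP => // _; rewrite entry_out //.
  by apply/orP; right; rewrite -leqNgt -Hs.
Qed.

Section Main.
Variables (n : nat) (a : seq nat).
Hypothesis Ha : size a = n.

Definition vT (T : filling n a) := [seq (entry T r 0).-1 | r <- pos a].
Definition shapeT (T : filling n a) : {ffun 'I_n -> 'I_(sumn a).+1} :=
  [ffun j : 'I_n => inord (nth 0 (mkcomp n (vT T) (flat a)) j)].

Lemma sof_inord (g : nat -> nat) m : (forall j, g j <= m) ->
  seq_of_ffun ([ffun j : 'I_n => inord (g j)] : {ffun 'I_n -> 'I_m.+1}) = map g (iota 0 n).
Proof.
move=> H; rewrite /seq_of_ffun -val_enum_ord -map_comp; apply: eq_map => j /=.
by rewrite ffunE inordK // ltnS.
Qed.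

Lemma mk_le T j : nth 0 (mkcomp n (vT T) (flat a)) j <= sumn a.
Proof.
case: (ltnP j n) => h.
  by rewrite nth_mkcomp //; case: ifP => _ //; rewrite -sumn_flat nth_le_sumn.
by rewrite nth_default // size_mkcomp.
Qed.

Lemma sof_shape T : seq_of_ffun (shapeT T) = mkcomp n (vT T) (flat a).
Proof.
rewrite sof_inord; last exact: mk_le.
by have := mkseq_nth 0 (mkcomp n (vT T) (flat a)); rewrite size_mkcomp /mkseq.
Qed.

Lemma vT_le T : is_qkt T -> forall i, i < size (pos a) ->
  nth 0 (vT T) i <= nth 0 (pos a) i.
Proof.
case/is_qktE => // _ hb _ i ia; rewrite (nth_map 0) //.
have /andP[_ h] : 0 < entry T (nth 0 (pos a) i) 0 <= (nth 0 (pos a) i).+1.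
  by apply: hb; rewrite cellin0 mem_nth.
by rewrite -subn1 leq_subLR add1n.
Qed.

Lemma shape_good T : is_qkt T ->
  pos (mkcomp n (vT T) (flat a)) = vT T /\ flat (mkcomp n (vT T) (flat a)) = flat a.
Proof.
move=> q; have [_ hb' [_ _ h4' _ _]] := (is_qktE T).1 q.
apply: mkcomp_pos.
- apply: (homo_sorted_in (P := mem (pos a))); last by exact: pos_sorted.
    move=> r r' /= ra ra' lt.
    have c1 : cellin a r 0 by rewrite cellin0.
    have c2 : cellin a r' 0 by rewrite cellin0.
    have := h4' r r' lt c1 c2; have /andP[p1 _] := hb' _ _ c1.
    have /andP[p2 _] := hb' _ _ c2.
    by rewrite -(prednK p1) -(prednK p2) ltnS.
  exact: allss.
- move=> x /mapP [r ra ->]; have c1 : cellin a r 0 by rewrite cellin0.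
  have /andP[_ h] := hb' _ _ c1.
  have : r < size a by move: ra; rewrite mem_pos => /andP[].
  rewrite Ha; apply: leq_ltn_trans; by rewrite -subn1 leq_subLR add1n.
- by rewrite size_map size_pos.
- by apply/negP => /flat_neq0; rewrite eqxx.
Qed.

Lemma good_shape T : is_qkt T ->
  dominates (seq_of_ffun (shapeT T)) a && (flat (seq_of_ffun (shapeT T)) == flat a).
Proof.
move=> q; rewrite sof_shape; have [p fl] := shape_good q.
rewrite fl eqxx andbT; apply: dom_of_pos => //.
by move=> i ia; rewrite p; apply: vT_le.
Qed.
End Main.

Lemma qk2_ext a t1 t2 : (forall r c, t1 r c = t2 r c) -> qk2 a t1 -> qk2 a t2.
Proof.
move=> H [h2 h3 h4 h5 h6]; split.
- by move=> r c cl; rewrite -!H; exact: h2.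
- by move=> r r' c ne c1 c2; rewrite -!H; exact: h3.
- by move=> r r' lt c1 c2; rewrite -!H; exact: h4.
- by move=> r r' c lt c1 c2; rewrite -!H => tl; exact: h5.
- by move=> r r' c lt ln c1 c2; rewrite -!H; exact: h6.
Qed.

Lemma zeroout_ext a t1 t2 : (forall r c, t1 r c = t2 r c) -> zeroout a t1 -> zeroout a t2.
Proof. by move=> H z r c nc; rewrite -H z. Qed.

Lemma row_dec a t r c : qk2 a t -> cellin a r c -> t r c <= t r 0.
Proof.
case=> h2 _ _ _ _; elim: c => // c IH cl.
exact: leq_trans (h2 _ _ cl) (IH (cellS cl)).
Qed.

Section Fixed.
Variables (n : nat) (a : seq nat) (f : {ffun 'I_n -> 'I_(sumn a).+1}).
Hypothesis Ha : size a = n.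
Local Notation b := (seq_of_ffun f).
Hypothesis Hg : dominates b a && (flat b == flat a).

Lemma Hb : size b = n.
Proof. by rewrite /seq_of_ffun size_map size_enum_ord. Qed.
Lemma Hf : flat b = flat a.
Proof. by case/andP: Hg => _ /eqP. Qed.
Lemma Hd : dominates b a.
Proof. by case/andP: Hg. Qed.
Lemma Hs : sumn b = sumn a.
Proof. by rewrite -sumn_flat Hf sumn_flat. Qed.

Definition fwd (T : filling n a) : filling n b := mkfill n b (tr a b (entry T)).
Definition bwd (S : filling n b) : filling n a := mkfill n a (tr b a (entry S)).

Lemma entry_fwd T j c : entry (fwd T) j c = tr a b (entry T) j c.
Proof. exact: (entry_tr Hb Hs Hf). Qed.
Lemma entry_bwd S r c : entry (bwd S) r c = tr b a (entry S) r c.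
Proof. exact: (entry_tr Ha (esym Hs) (esym Hf)). Qed.

Lemma key T : is_qkt T -> shapeT T = f ->
  forall j, j \in pos b -> entry T (tau a b j) 0 = j.+1.
Proof.
move=> q e j jb.
have eb : seq_of_ffun f = mkcomp n (vT T) (flat a) by rewrite -e sof_shape.
have [p _] := shape_good Ha q.
have [_ hb _] := (is_qktE T).1 q.
move: jb; rewrite /tau eb p => jb.
have ii : index j (vT T) < size (pos a) by rewrite -(size_map (fun r => (entry T r 0).-1)) index_mem.
have hj := nth_index 0 jb; rewrite {1}/vT (nth_map 0) // in hj.
have cl : cellin a (nth 0 (pos a) (index j (vT T))) 0 by rewrite cellin0 mem_nth.
have /andP[p1 _] := hb _ _ cl.
by rewrite -[in RHS]hj prednK.
Qed.

Lemma F1 T : is_qkt T && (shapeT T == f) -> is_qkt (fwd T) && first_col_id (fwd T).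
Proof.
case/andP=> q /eqP e; have [z hb h2] := (is_qktE T).1 q.
apply/andP; split.
  apply/is_qktE; split.
  - apply: (zeroout_ext (t1 := tr a b (entry T))); first by move=> *; rewrite entry_fwd.
    by move=> r c nc; apply: (zeroout_tr Hf z nc).
  - move=> j c cl; rewrite entry_fwd /tr (cellin_pos cl).
    have jb := cellin_pos cl; rewrite (@cell_tau _ _ Hf j c jb) in cl.
    have /andP[p1 _] := hb _ _ cl; rewrite p1 /= -(key q e jb).
    exact: row_dec h2 cl.
  - apply: (qk2_ext (t1 := tr a b (entry T))); first by move=> *; rewrite entry_fwd.
    exact: (qk2_tr Hf h2).
apply/(fcidE Hb) => j cl; rewrite entry_fwd /tr (cellin_pos cl) key //.
exact: cellin_pos cl.
Qed.

Lemma F2 S : is_qkt S && first_col_id S -> is_qkt (bwd S) && (shapeT (bwd S) == f).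
Proof.
case/andP=> q fc; have [z hb h2] := (is_qktE S).1 q; have fc' := (fcidE Hb S).1 fc.
apply/andP; split.
  apply/is_qktE; split.
  - apply: (zeroout_ext (t1 := tr b a (entry S))); first by move=> *; rewrite entry_bwd.
    by move=> r c nc; apply: (zeroout_tr (esym Hf) z nc).
  - move=> r c cl; rewrite entry_bwd /tr (cellin_pos cl).
    have ra := cellin_pos cl; rewrite (@cell_tau _ _ (esym Hf) r c ra) in cl.
    have /andP[p1 p2] := hb _ _ cl; rewrite p1 /= (leq_trans p2) // ltnS.
    have := pos_of_dom Hf Hd (_ : index r (pos a) < size (pos a)).
    by rewrite nth_index //; apply; rewrite index_mem.
  - apply: (qk2_ext (t1 := tr b a (entry S))); first by move=> *; rewrite entry_bwd.
    exact: (qk2_tr (esym Hf) h2).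
have ev : vT (bwd S) = pos b.
  rewrite /vT -(map_tau (esym Hf)); apply/eq_in_map => r ra.
  by rewrite entry_bwd /tr ra fc' // cellin0 (tau_mem (esym Hf) ra).
apply/eqP/ffunP => j; rewrite ffunE ev.
have : b = mkcomp (size b) (pos b) (flat b) := comp_mk b.
rewrite Hb Hf => <-.
by rewrite /seq_of_ffun (nth_map j) ?size_enum_ord // nth_ord_enum inord_val.
Qed.

Lemma F3 T : is_qkt T -> bwd (fwd T) = T.
Proof.
move=> q; have [z _ _] := (is_qktE T).1 q.
apply: fill_eq => r c; rewrite entry_bwd.
rewrite (@tr_ext (seq_of_ffun f) a (entry (fwd T)) (tr a (seq_of_ffun f) (entry T)) (fun j c => entry_fwd T j c)).
exact: tr_tr Hf z r c.
Qed.

Lemma F4 S : is_qkt S -> fwd (bwd S) = S.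
Proof.
move=> q; have [z _ _] := (is_qktE S).1 q.
apply: fill_eq => r c; rewrite entry_fwd.
rewrite (@tr_ext a (seq_of_ffun f) (entry (bwd S)) (tr (seq_of_ffun f) a (entry S)) (fun j c => entry_bwd S j c)).
exact: tr_tr (esym Hf) z r c.
Qed.

Lemma F5 T : weight (fwd T) = weight T.
Proof.
rewrite /weight; apply: eq_bigr => i _.
rewrite (card_cells Hb) (card_cells Ha); congr (_ ^+ _)%R.
rewrite -(G_tr Hf); apply: eq_bigr => j _; rewrite /G; apply: eq_count => c.
by rewrite entry_fwd.
Qed.
End Fixed.

Unset Implicit Arguments.
Local Open Scope ring_scope.

Theorem lemma2p20 (n : nat) (a : seq nat) (Ha : size a = n) :
  QK n a =
  \sum_(f : {ffun 'I_n -> 'I_(sumn a).+1} |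
          dominates (seq_of_ffun f) a && (flat (seq_of_ffun f) == flat a))
     QK1 n (seq_of_ffun f).
Proof.
rewrite /QK (partition_big (@shapeT n a)
  (fun f => dominates (seq_of_ffun f) a && (flat (seq_of_ffun f) == flat a))); last first.
  by move=> T; apply: good_shape.
apply: eq_bigr => f Hg; rewrite /QK1.
apply: (@big_bij_eq _ _ _ _ _ _ _ (@fwd n a f) (@bwd n a f)).
- exact: F1 Ha Hg.
- exact: F2 Ha Hg.
- by move=> T /andP[q _]; exact: (F3 Ha Hg q).
- by move=> S /andP[q _]; exact: (F4 Ha Hg q).
- by move=> T _; exact: (F5 Ha Hg T).
Qed.
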